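(* Let $N\ge 1$ and let $(A_N,H_N,D_N)$ be the fuzzy sphere spectral triple described in the context. Then the module of one-forms $\mathcal{E}=\Omega^1(A_N)$ is a free right $A_N$-module of rank $3$ with basis the central elements $1\otimes\sigma_1,\ 1\otimes\sigma_2,\ 1\otimes\sigma_3$.
   Context: Let $J_1,J_2,J_3$ be a basis of the Lie algebra $su(2)$ with $[J_k,J_l]=\sum_{m=1}^3\epsilon_{klm}J_m$ ($\epsilon$ the totally antisymmetric symbol, $\epsilon_{123}=1$). For $n\ge0$ let $\rho_{n/2}$ be the $(n+1)$-dimensional irreducible unitary representation of $su(2)$ on $\mathbb{C}^{n+1}$ (so each $\rho_{n/2}(J_k)$ is skew-Hermitian). Let $K_N=\oplus_{n=0}^N\mathbb{C}^{n+1}$, $X_k=\oplus_{n=0}^N\rho_{n/2}(J_k)\in B(K_N)$, $A_N=B(K_N)$, $H_N=K_N\otimes_{\mathbb{C}}\mathbb{C}^2$ with $a\in A_N$ acting as $a\otimes 1$. Let $\tau_1,\tau_2,\tau_3$ be the Pauli matrices, $\sigma_k=\sqrt{-1}\,\tau_k$, and $D_N=\sum_{k=1}^3X_k\otimes\sigma_k$; identify $B(H_N)=A_N\otimes_{\mathbb{C}}M_2(\mathbb{C})$. The one-forms of the spectral triple are $\Omega^1(A_N)=\{\sum_ja_j[D_N,b_j]:a_j,b_j\in A_N\}\subseteq A_N\otimes M_2(\mathbb{C})$, an $A_N$-bimodule, with $da=[D_N,a]$. *)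

(* Defs.v *)
(* Complex numbers are modelled by algC (algebraic complex
   numbers), which contains all matrix entries of the spin representations. *)
From mathcomp Require Import all_boot all_order all_algebra all_field.
From mathcomp Require Export mxtens.
Unset Printing Implicit Defensive.
Import GRing.Theory Num.Theory.
Local Open Scope ring_scope.

(* totally antisymmetric symbol on indices 'I_3 = {0,1,2} (stand for 1,2,3),
   with eps 0 1 2 = 1 *)
Definition eps (k l m : 'I_3) : algC :=
  if [&& k != l, l != m & k != m] then
    (if ((l + 3 - k) %% 3 == 1)%N then 1 else -1)
  else 0.

Definition adjmx {n} (M : 'M[algC]_n) : 'M[algC]_n := map_mx Num.conj M^T.

Definition su2_unitary_rep {n} (X : 'I_3 -> 'M[algC]_n) : Prop :=
  (forall k, adjmx (X k) = - X k) /\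
  (forall k l, X k *m X l - X l *m X k = \sum_(m < 3) eps k l m *: X m).

(* irreducibility for the action on column vectors: every subspace of C^n
   (spanned by the columns of U, i.e. the rows of U^T) invariant under all
   X_k is 0 or everything *)
Definition irreducible_rep {n} (X : 'I_3 -> 'M[algC]_n) : Prop :=
  forall U : 'M[algC]_n,
    (forall k, stablemx U (X k)^T) -> (\rank U == 0)%N || (\rank U == n)%N.

Definition dimK (N : nat) : nat := \sum_(i < N.+1) i.+1.

Notation AN N := ('M[algC]_(dimK N)).
(* B(H_N) = A_N (x) M_2(C), realised by Kronecker products *)
Notation BH N := ('M[algC]_(dimK N * 2)).

(* X_k = (+)_{n=0}^N rho_{n/2}(J_k) *)
Definition Xsum (N : nat) (rho : forall n : nat, 'I_3 -> 'M[algC]_n.+1)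
  (k : 'I_3) : AN N :=
  \mxdiag_(i < N.+1) rho (nat_of_ord i) k.

(* Pauli matrices tau_1, tau_2, tau_3 (indexed 0,1,2) and sigma_k = i tau_k *)
Definition tau (k : 'I_3) : 'M[algC]_2 :=
  if k == 0 :> nat then \matrix_(i < 2, j < 2) (if i == j then 0 else 1)
  else if k == 1 :> nat then
    \matrix_(i < 2, j < 2)
      (if i == j then 0 else if i == 0 :> nat then - 'i else 'i)
  else \matrix_(i < 2, j < 2)
      (if i == j then (if i == 0 :> nat then 1 else -1) else 0).
Definition sigma (k : 'I_3) : 'M[algC]_2 := 'i *: tau k.

Definition act {N} (a : AN N) : BH N := a *t (1%:M : 'M[algC]_2).
Definition esig N (k : 'I_3) : BH N := (1%:M : AN N) *t sigma k.

Definition Dirac N rho : BH N := \sum_(k < 3) Xsum N rho k *t sigma k.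

Definition dform N rho (a : AN N) : BH N :=
  Dirac N rho *m act a - act a *m Dirac N rho.

Definition one_form N rho (w : BH N) : Prop :=
  exists (m : nat) (a b : 'I_m -> AN N),
    w = \sum_(j < m) act (a j) *m dform N rho (b j).

(* Main.v *)
Require Import Defs.
From mathcomp Require Import all_boot all_order all_algebra all_field.
From mathcomp Require Import ring.
Import GRing.Theory Num.Theory.
Local Open Scope ring_scope.

Definition o0 : 'I_3 := Ordinal (isT : (0 < 3)%N).
Definition o1 : 'I_3 := Ordinal (isT : (1 < 3)%N).
Definition o2 : 'I_3 := Ordinal (isT : (2 < 3)%N).

Lemma sum3 (V : nmodType) (F : 'I_3 -> V) : \sum_(m < 3) F m = F o0 + F o1 + F o2.
Proof.
rewrite !big_ord_recl big_ord0 addr0 addrA.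
by congr (F _ + F _ + F _); apply: val_inj.
Qed.

Lemma eps_vals : eps o0 o1 o2 = 1 /\ eps o1 o2 o0 = 1 /\ eps o2 o0 o1 = 1.
Proof. by rewrite /eps. Qed.

Lemma eps_diag k l : (k == l) -> eps k l =1 (fun _ => 0).
Proof. by move=> /eqP-> m; rewrite /eps eqxx. Qed.

Lemma su2_rels n (X : 'I_3 -> 'M[algC]_n) : su2_unitary_rep X ->
  [/\ X o0 *m X o1 - X o1 *m X o0 = X o2,
      X o1 *m X o2 - X o2 *m X o1 = X o0 &
      X o2 *m X o0 - X o0 *m X o2 = X o1].
Proof.
move=> [_ H]; split; rewrite H sum3 /eps /=; rewrite ?scale0r ?scale1r ?add0r ?addr0 //.
Qed.

Section Alg.
Variables (F : fieldType) (A : algType F).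
Definition br (x y : A) := x * y - y * x.

Lemma zm3 (V : zmodType) (a b c a' b' c' : V) :
  (a + b + c) - (a' + b' + c') = (a - a') + (b - b') + (c - c').
Proof. by rewrite opprD opprD (addrACA (a + b)) (addrACA a). Qed.

Lemma br_lin x (l0 l1 l2 : F) p0 p1 p2 :
  br x (l0 *: p0 + l1 *: p1 + l2 *: p2) = l0 *: br x p0 + l1 *: br x p1 + l2 *: br x p2.
Proof. by rewrite /br !mulrDr !mulrDl -!scalerAr -!scalerAl zm3 !scalerBr. Qed.

Lemma brxx x : br x x = 0. Proof. by rewrite /br subrr. Qed.
Lemma brC x y : br x y = - br y x. Proof. by rewrite /br opprB. Qed.
Lemma br0 x : br x 0 = 0. Proof. by rewrite /br mulr0 mul0r subrr. Qed.
Lemma br0l x : br 0 x = 0. Proof. by rewrite brC br0 oppr0. Qed.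
Lemma brZr x l y : br x (l *: y) = l *: br x y.
Proof. by rewrite /br -scalerAr -scalerAl scalerBr. Qed.
Lemma brZl x l y : br (l *: x) y = l *: br x y.
Proof. by rewrite brC brZr brC scalerN opprK. Qed.

Lemma alg_indep (p0 p1 p2 : A) (l0 l1 l2 : F) :
  br p0 p1 = p2 -> br p1 p2 = p0 -> br p2 p0 = p1 ->
  l0 *: p0 + l1 *: p1 + l2 *: p2 = 0 ->
  ~ (p0 = 0 /\ p1 = 0 /\ p2 = 0) -> [/\ l0 = 0, l1 = 0 & l2 = 0].
Proof.
move=> r2 r0 r1 hQ hnz.
have c0 := br_lin p0 l0 l1 l2 p0 p1 p2.
have c1 := br_lin p1 l0 l1 l2 p0 p1 p2.
have c2 := br_lin p2 l0 l1 l2 p0 p1 p2.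
rewrite hQ br0 brxx [br p0 p2]brC r1 r2 scaler0 add0r scalerN in c0.
rewrite hQ br0 brxx [br p1 p0]brC r2 r0 scaler0 addr0 scalerN in c1.
rewrite hQ br0 brxx [br p2 p1]brC r0 r1 scaler0 addr0 scalerN in c2.
(* c0 : 0 = l1 p2 - l2 p1 ; c1 : 0 = -l0 p2 + l2 p0 ; c2 : 0 = l0 p1 - l1 p0 *)
have [z0|nz0] := eqVneq l0 0.
  have [z1|nz1] := eqVneq l1 0.
    have [z2|nz2] := eqVneq l2 0; first by [].
    exfalso; apply: hnz.
    rewrite z1 scale0r add0r in c0.
    have e1 : p1 = 0.
      by apply: (@scalerI _ _ l2 nz2); rewrite scaler0 -[LHS]opprK -c0 oppr0.
    have e0 : p0 = 0 by rewrite -r0 e1 br0l.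
    by split => //; split => //; rewrite -r2 e0 br0l.
  exfalso; apply: hnz.
  rewrite z0 scale0r add0r in c2.
  have e0 : p0 = 0.
    by apply: (@scalerI _ _ l1 nz1); rewrite scaler0 -[LHS]opprK -c2 oppr0.
  have e2 : p2 = 0 by rewrite -r2 e0 br0l.
  by split => //; split => //; rewrite -r1 e2 br0l.
exfalso; apply: hnz.
have h1 : l0 *: p1 = l1 *: p0 by apply/eqP; rewrite -subr_eq0 -c2.
have e2 : p2 = 0.
  apply: (@scalerI _ _ l0 nz0); rewrite scaler0 -r2 -brZr h1 brZr brxx scaler0 //.
have e0 : p0 = 0 by rewrite -r0 e2 br0.
split => //; split => //.
by apply: (@scalerI _ _ l0 nz0); rewrite h1 e0 !scaler0.
Qed.
End Alg.

Lemma dimK_gt0 N : (0 < dimK N)%N.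
Proof. by rewrite /dimK big_ord_recl. Qed.
Definition i0 N : 'I_(dimK N) := Ordinal (dimK_gt0 N).

Lemma ord3P (k : 'I_3) : [\/ k = o0, k = o1 | k = o2].
Proof.
case: k => [[|[|[|m]]] Hm] //.
- by apply: Or31; apply: val_inj.
- by apply: Or32; apply: val_inj.
- by apply: Or33; apply: val_inj.
Qed.

Lemma rho0_zero (X : 'I_3 -> 'M[algC]_1) : su2_unitary_rep X -> forall k, X k = 0.
Proof.
move=> /su2_rels [h2 h0 h1].
have cm : forall A B : 'M[algC]_1, A *m B - B *m A = 0.
  by move=> A B; apply/matrixP => i j; rewrite [i]ord1 [j]ord1 !mxE !big_ord1 mulrC subrr.
by move=> k; case: (ord3P k) => ->; [rewrite -h0 | rewrite -h1 | rewrite -h2]; rewrite cm.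
Qed.

Lemma rho1_nz (X : 'I_3 -> 'M[algC]_2) : irreducible_rep X ->
  ~ (X o0 = 0 /\ X o1 = 0 /\ X o2 = 0).
Proof.
move=> Hi [z0 [z1 z2]].
have st : (forall k, stablemx (delta_mx 0 0 : 'M[algC]_2) (X k)^T).
  move=> k; case: (ord3P k) => ->; by rewrite ?z0 ?z1 ?z2 trmx0 mulmx0 sub0mx.
by have := Hi _ st; rewrite mxrank_delta.
Qed.

Lemma X00 N (rho : forall n : nat, 'I_3 -> 'M[algC]_n.+1) k :
  rho 0%N k = 0 -> Xsum N rho k (i0 N) (i0 N) = 0.
Proof.
move=> z.
have e : nat_of_ord (@tagnat.Rank N.+1 (fun i : 'I_N.+1 => (nat_of_ord i).+1) ord0 0) = 0%N.
  by rewrite tagnat.RankEsum big_pred0.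
have e' : @tagnat.Rank N.+1 (fun i : 'I_N.+1 => (nat_of_ord i).+1) ord0 0 = i0 N.
  by apply: ord_inj; rewrite e.
have h := @submxblock_diag _ N.+1 (fun i : 'I_N.+1 => (nat_of_ord i).+1)
   (fun i => rho (nat_of_ord i) k) ord0.
move/matrixP: h => /(_ 0 0); rewrite [in X in X = _ -> _]mxE e' /= z mxE.
by move=> ->; rewrite mxE.
Qed.

Lemma Xblock N (rho : forall n : nat, 'I_3 -> 'M[algC]_n.+1) (i : 'I_N.+1) (c : 'I_3 -> algC) :
  @submxblock _ _ _ (fun i : 'I_N.+1 => (nat_of_ord i).+1) (fun i : 'I_N.+1 => (nat_of_ord i).+1)
    (\sum_k c k *: Xsum N rho k) i i = \sum_k c k *: rho (nat_of_ord i) k.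
Proof.
rewrite submxblock_sum; apply: eq_bigr => k _.
rewrite -(@submxblock_diag _ N.+1 (fun i : 'I_N.+1 => (nat_of_ord i).+1)
   (fun i => rho (nat_of_ord i) k) i).
by apply/matrixP => a b; rewrite !mxE.
Qed.

Lemma X_indep N (HN : (1 <= N)%N) (rho : forall n : nat, 'I_3 -> 'M[algC]_n.+1)
  (Hrep : forall n : nat, su2_unitary_rep (rho n))
  (Hirr : forall n : nat, irreducible_rep (rho n)) (c : 'I_3 -> algC) :
  \sum_k c k *: Xsum N rho k = 0 -> forall k, c k = 0.
Proof.
move=> H.
pose i1 : 'I_N.+1 := Ordinal (HN : (1 < N.+1)%N).
have := Xblock N rho i1 c; rewrite H submxblock0 => /esym; rewrite sum3 /= => h.
have [r2 r0 r1] := @su2_rels _ _ (Hrep 1%N).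
rewrite !mulmxE in r2 r0 r1.
have [z0 z1 z2] := @alg_indep algC _ _ _ _ (c o0) (c o1) (c o2) r2 r0 r1 h (@rho1_nz _ (Hirr 1%N)).
by move=> k; case: (ord3P k) => ->.
Qed.

Definition Mx N rho : 'M[algC]_(3, dimK N * dimK N) := \matrix_(k < 3) mxvec (Xsum N rho k).

Lemma Mx_free N (HN : (1 <= N)%N) (rho : forall n : nat, 'I_3 -> 'M[algC]_n.+1)
  (Hrep : forall n : nat, su2_unitary_rep (rho n))
  (Hirr : forall n : nat, irreducible_rep (rho n)) : row_free (Mx N rho).
Proof.
rewrite -kermx_eq0; apply/eqP/row_matrixP => i; rewrite row0.
set u := row i (kermx _).
have hu : u *m Mx N rho = 0 by apply/sub_kermxP; exact: row_sub.
have hs : \sum_k u 0 k *: Xsum N rho k = 0.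
  apply/matrixP => a b; move/matrixP: hu => /(_ 0 (mxvec_index a b)).
  rewrite [in RHS]mxE => hab.
  rewrite [in RHS]mxE -hab mxE summxE; apply: eq_bigr => k _.
  rewrite [LHS]mxE /Mx; congr (_ * _); by rewrite [in RHS]mxE mxvecE.
apply/rowP => k; rewrite [RHS]mxE. exact: (@X_indep N HN rho Hrep Hirr (fun k => u 0 k) hs k).
Qed.

Lemma dYd (R : comRingType) n (Y : 'M[R]_n) s p q t :
  (delta_mx s p : 'M[R]_n) *m Y *m delta_mx q t = Y p q *: (delta_mx s t : 'M[R]_n).
Proof.
apply/matrixP => i j; rewrite !mxE (bigD1 q) //= big1 ?addr0; last first.
  by move=> c /negPf nc; rewrite !mxE nc /= mulr0.
rewrite [delta_mx q t q j]mxE eqxx /= [(_ *m _) i q]mxE (bigD1 p) //= big1 ?addr0; last first.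
  by move=> c /negPf nc; rewrite mxE nc andbF mul0r.
rewrite mxE !eqxx andbT.
by case: (i == s); case: (j == t); rewrite /= ?mulr1 ?mul1r ?mulr0 ?mul0r.
Qed.

Lemma delta_ident (R : comRingType) n (Y : 'M[R]_n) (i0 : 'I_n) s p' p t :
  Y i0 i0 = 0 ->
  Y p' p *: (delta_mx s t : 'M[R]_n) = (delta_mx s p' : 'M[R]_n) *m (Y *m delta_mx p t - delta_mx p t *m Y)
     - (p' == p)%:R *: (delta_mx s i0 *m (Y *m delta_mx i0 t - delta_mx i0 t *m Y)).
Proof.
move=> Y0.
rewrite !mulmxBr !mulmxA !dYd Y0 scale0r add0r mul_delta_mx mul_delta_mx_cond.
case: (p' == p); rewrite ?scale1r ?scale0r ?mulr1n ?mulr0n ?mul0mx ?subr0 ?oppr0 ?opprK //.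
by rewrite subrK.
Qed.

Section Tens.
Variable (R : comRingType).
Lemma tensmxDl m n p q (A B : 'M[R]_(m, n)) (C : 'M[R]_(p, q)) :
  (A + B) *t C = A *t C + B *t C.
Proof. by apply/matrixP => i j; rewrite !mxE mulrDl. Qed.
Lemma tensmxNl m n p q (A : 'M[R]_(m, n)) (C : 'M[R]_(p, q)) :
  (- A) *t C = - (A *t C).
Proof. by apply/matrixP => i j; rewrite !mxE mulNr. Qed.
Lemma tensmxBl m n p q (A B : 'M[R]_(m, n)) (C : 'M[R]_(p, q)) :
  (A - B) *t C = A *t C - B *t C.
Proof. by rewrite tensmxDl tensmxNl. Qed.
Lemma tensmx_suml m n p q (I : Type) (r : seq I) (F : I -> 'M[R]_(m, n)) (C : 'M[R]_(p, q)) :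
  (\sum_(i <- r) F i) *t C = \sum_(i <- r) F i *t C.
Proof.
elim: r => [|x r IH]; first by rewrite !big_nil tens0mx.
by rewrite !big_cons tensmxDl IH.
Qed.
End Tens.

Definition comm N rho k (b : AN N) : AN N := Xsum N rho k *m b - b *m Xsum N rho k.

Lemma act_mul N (a b : AN N) : act a *m act b = act (a *m b).
Proof. by rewrite /act tensmx_mul mulmx1. Qed.
Lemma esig_act N k (a : AN N) : esig N k *m act a = a *t sigma k.
Proof. by rewrite /act /esig tensmx_mul mulmx1 mul1mx. Qed.
Lemma act_esig N k (a : AN N) : act a *m esig N k = a *t sigma k.
Proof. by rewrite /act /esig tensmx_mul mulmx1 mul1mx. Qed.
Lemma act_tens N k (a c : AN N) : act a *m (c *t sigma k) = (a *m c) *t sigma k.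
Proof. by rewrite /act tensmx_mul mul1mx. Qed.

Lemma dform_eq N rho (b : AN N) :
  dform N rho b = \sum_k comm N rho k b *t sigma k.
Proof.
rewrite /dform /Dirac mulmx_suml mulmx_sumr -sumrB; apply: eq_bigr => k _.
by rewrite /comm tensmxBl /act !tensmx_mul mulmx1 mul1mx.
Qed.

Lemma key N rho (I : Type) (r : seq I) (a b : I -> AN N) :
  \sum_(i <- r) act (a i) *m dform N rho (b i) =
  \sum_k esig N k *m act (\sum_(i <- r) a i *m comm N rho k (b i)).
Proof.
under eq_bigr do rewrite dform_eq mulmx_sumr.
under eq_bigr do under eq_bigr do rewrite act_tens.
rewrite exchange_big /=; apply: eq_bigr => k _.
by rewrite esig_act tensmx_suml.
Qed.

Definition inform N rho (f : 'I_3 -> AN N) :=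
  exists s : seq (AN N * AN N), forall k, f k = \sum_(x <- s) x.1 *m comm N rho k x.2.

Section Inform.
Variables (N : nat) (rho : forall n : nat, 'I_3 -> 'M[algC]_n.+1).

Lemma inform_ext {f g} : inform N rho f -> (forall k, f k = g k) -> inform N rho g.
Proof. by move=> [s h] e; exists s => k; rewrite -e h. Qed.

Lemma inform0 : inform N rho (fun _ => 0).
Proof. by exists [::] => k; rewrite big_nil. Qed.

Lemma informD {f g} : inform N rho f -> inform N rho g -> inform N rho (fun k => f k + g k).
Proof. by move=> [s1 h1] [s2 h2]; exists (s1 ++ s2) => k; rewrite big_cat h1 h2. Qed.

Lemma informL (c : AN N) {f} : inform N rho f -> inform N rho (fun k => c *m f k).
Proof.
move=> [s h]; exists [seq (c *m x.1, x.2) | x <- s] => k.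
by rewrite h big_map mulmx_sumr; apply: eq_bigr => x _; rewrite mulmxA.
Qed.

Lemma informZ (x : algC) {f} : inform N rho f -> inform N rho (fun k => x *: f k).
Proof.
move=> h; apply: (inform_ext (informL (x%:M) h)) => k.
by rewrite mul_scalar_mx.
Qed.

Lemma informB {f g} : inform N rho f -> inform N rho g -> inform N rho (fun k => f k - g k).
Proof.
move=> hf hg; apply: (inform_ext (informD hf (informZ (-1) hg))) => k.
by rewrite scaleN1r.
Qed.

Lemma inform1 (a b : AN N) : inform N rho (fun k => a *m comm N rho k b).
Proof. by exists [:: (a, b)] => k; rewrite big_seq1. Qed.

Lemma inform_sum (I : Type) (r : seq I) (F : I -> 'I_3 -> AN N) :
  (forall i, inform N rho (F i)) -> inform N rho (fun k => \sum_(i <- r) F i k).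
Proof.
move=> h; elim: r => [|x r IH].
  by apply: (inform_ext inform0) => k; rewrite big_nil.
by apply: (inform_ext (informD (h x) IH)) => k; rewrite big_cons.
Qed.
End Inform.

Lemma inform_all N (HN : (1 <= N)%N) (rho : forall n : nat, 'I_3 -> 'M[algC]_n.+1)
  (Hrep : forall n : nat, su2_unitary_rep (rho n))
  (Hirr : forall n : nat, irreducible_rep (rho n)) (f : 'I_3 -> AN N) :
  inform N rho f.
Proof.
have [D hD] := row_freeP (@Mx_free N HN rho Hrep Hirr).
have X0 : forall k, Xsum N rho k (i0 N) (i0 N) = 0.
  by move=> k; apply: X00; apply: (@rho0_zero (rho 0%N) (Hrep 0%N)).
pose G r s t := fun k => (mxvec (Xsum N rho k) 0 r) *: (delta_mx s t : AN N).
have hG : forall r s t, inform N rho (G r s t).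
  move=> r s t; case: (mxvec_indexP r) => p' p.
  apply: (inform_ext _ _ (informB _ _ (inform1 N rho (delta_mx s p') (delta_mx p t)) (informZ _ _ ((p' == p)%:R) (inform1 N rho (delta_mx s (i0 N)) (delta_mx (i0 N) t))))) => k.
  by rewrite /G mxvecE (delta_ident _ _ _ _ _ _ _ _ (X0 k)).
have hk : forall k k0, (k == k0)%:R = \sum_r mxvec (Xsum N rho k) 0 r * D r k0.
  move=> k k0; move/matrixP: hD => /(_ k k0); rewrite [in RHS]mxE mxE => <-.
  by apply: eq_bigr => r _; rewrite mxE.
have hdel : forall k0 (c : AN N), inform N rho (fun k => (k == k0)%:R *: c).
  move=> k0 c.
  have H : inform N rho (fun k => \sum_(s <- index_enum _) \sum_(t <- index_enum _)
        \sum_(r <- index_enum _) (c s t * D r k0) *: G r s t k).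
    apply: inform_sum => s; apply: inform_sum => t; apply: inform_sum => r.
    exact: informZ.
  apply: (inform_ext _ _ H).
  move=> k; apply/esym; rewrite {1}(matrix_sum_delta c) scaler_sumr; apply: eq_bigr => s _.
  rewrite scaler_sumr; apply: eq_bigr => t _.
  rewrite /G; under eq_bigr do rewrite scalerA.
  rewrite -scaler_suml scalerA; congr (_ *: _).
  rewrite hk mulr_suml; apply: eq_bigr => r _; ring.
have H : inform N rho (fun k => \sum_(k0 <- index_enum _) (k == k0)%:R *: f k0).
  by apply: inform_sum => k0; apply: hdel.
apply: (inform_ext _ _ H).
  move=> k; rewrite (bigD1 k) //= eqxx scale1r big1 ?addr0 // => j /negPf.
  by rewrite eq_sym => ->; rewrite scale0r.
Qed.

Definition j0 : 'I_2 := ord0.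
Definition j1 : 'I_2 := Ordinal (isT : (1 < 2)%N).

Lemma sig_entries :
  [/\ sigma o0 j0 j0 = 0, sigma o1 j0 j0 = 0 & sigma o2 j0 j0 = 'i] /\
  [/\ sigma o0 j0 j1 = 'i, sigma o1 j0 j1 = 1 & sigma o2 j0 j1 = 0] /\
  [/\ sigma o0 j1 j0 = 'i, sigma o1 j1 j0 = -1 & sigma o2 j1 j0 = 0].
Proof.
have ii : 'i * 'i = -1 :> algC by rewrite -expr2 sqrCi.
by rewrite /sigma /tau /= !mxE /= ?mulr0 ?mulr1 ?mulrN ?ii ?opprK.
Qed.

Lemma free_part N (a : 'I_3 -> AN N) :
  \sum_(k < 3) esig N k *m act (a k) = 0 -> forall k, a k = 0.
Proof.
move=> H.
have hE : forall u v i j, \sum_(k < 3) a k i j * sigma k u v = 0.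
  move=> u v i j; move/matrixP: H => /(_ (mxtens_index (i, u)) (mxtens_index (j, v))).
  rewrite [RHS]mxE summxE => h; rewrite -[RHS]h; apply: eq_bigr => k _.
  by rewrite esig_act tensmxE.
have [[s00 s10 s20] [[s01 s11 s21] [t00 t10 t20]]] := sig_entries.
have ai : forall i j, [/\ a o0 i j = 0, a o1 i j = 0 & a o2 i j = 0].
  move=> i j.
  have e00 := hE j0 j0 i j; have e01 := hE j0 j1 i j; have e10 := hE j1 j0 i j.
  rewrite sum3 s00 s10 s20 !mulr0 !add0r in e00.
  rewrite sum3 s01 s11 s21 mulr0 addr0 mulr1 in e01.
  rewrite sum3 t00 t10 t20 mulr0 addr0 mulrN1 in e10.
  have z2 : a o2 i j = 0.
    by move/eqP: e00; rewrite mulf_eq0 (negPf (neq0Ci _)) orbF => /eqP.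
  have z0 : a o0 i j = 0.
    have : (a o0 i j * 'i + a o1 i j) + (a o0 i j * 'i - a o1 i j) = a o0 i j * 'i *+ 2.
      by rewrite addrACA subrr addr0 mulr2n.
    rewrite e01 e10 add0r => /esym.
    move/eqP; rewrite -mulr_natr mulf_eq0 mulf_eq0 (negPf (neq0Ci _)) orbF pnatr_eq0 orbF.
    by move/eqP.
  by split => //; move: e01; rewrite z0 mul0r add0r.
move=> k; apply/matrixP => i j; rewrite [RHS]mxE.
by have [z0 z1 z2] := ai i j; case: (ord3P k) => ->.
Qed.

Theorem proposition8p1 (N : nat) (HN : (1 <= N)%N)
  (rho : forall n : nat, 'I_3 -> 'M[algC]_n.+1)
  (Hrep : forall n : nat, su2_unitary_rep (rho n))
  (Hirr : forall n : nat, irreducible_rep (rho n)) :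
  (forall (k : 'I_3) (a : AN N), act a *m esig N k = esig N k *m act a) /\
  (forall a : 'I_3 -> AN N,
      one_form N rho (\sum_(k < 3) esig N k *m act (a k))) /\
  (forall w : BH N, one_form N rho w ->
      exists a : 'I_3 -> AN N, w = \sum_(k < 3) esig N k *m act (a k)) /\
  (forall a : 'I_3 -> AN N,
      \sum_(k < 3) esig N k *m act (a k) = 0 -> forall k, a k = 0).
Proof.
split; first by move=> k a; rewrite act_esig esig_act.
split.
  move=> a; have [s hs] := @inform_all N HN rho Hrep Hirr (fun k => a k).
  exists (size s), (fun j => (nth (0, 0) s j).1), (fun j => (nth (0, 0) s j).2).
  have -> : \sum_(j < size s) act (nth (0, 0) s j).1 *m dform N rho (nth (0, 0) s j).2
          = \sum_(x <- s) act x.1 *m dform N rho x.2.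
    by rewrite (big_nth (0, 0)) big_mkord.
  rewrite (key N rho _ s (fun x => x.1) (fun x => x.2)).
  by apply: eq_bigr => k _; rewrite hs.
split; last exact: free_part.
move=> w [m [a [b ->]]].
exists (fun k => \sum_(j < m) a j *m comm N rho k (b j)).
exact: (key N rho _ (index_enum 'I_m) a b).
Qed.
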